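(* Let $V$ be a finite vocabulary, $U\in\mathbb{R}^{|V|\times d}$, $u_t=U^\top e_t$, and let $r\in\mathbb{R}^d$ be the unsteered final representation of a query $q$, with $P_\theta(t\mid q)=\mathrm{softmax}(Ur)_t$. Let $c\in V$ be the correct answer token, $P_0=P_\theta(c\mid q)<1$. Let $S\subseteq V$ with $c\in S$ and $|S|=T\ge 3$, and define $\epsilon\in[0,1)$ by $\sum_{i\in S\setminus\{c\}}P_\theta(i\mid q)=(1-\epsilon)(1-P_0)$ (assume this sum is positive). Let $r_e\neq 0$ and let the steered distribution be $P_{\theta,r_e}(t\mid q)=\mathrm{softmax}(U(r+d))_t$ where $d=\lambda|r_e|\,v$, $\lambda>0$, and $v$ is a random unit vector such that the random variables $X_i=\langle v,u_i\rangle$, $i\in S$, are i.i.d. with a continuous distribution of variance $\sigma^2>0$. Define $I_\pm=\{i\in S\setminus\{c\}:\pm(X_i-X_c)>0\}$, $P_\pm=\sum_{i\in I_\pm}P_\theta(i\mid q)$, and when $I_\pm\neq\emptyset$, $c_\pm=\frac{1}{P_\pm}\sum_{i\in I_\pm}P_\theta(i\mid q)(X_i-X_c)$; set $$\alpha=\frac{\min\{P_+,P_-\}}{(1-P_0)(1-\epsilon)},\qquad \beta=\frac{\min\{|c_-|,c_+\}}{\sigma}.$$ Then with probability at least $1-\frac{2}{T}$ (over the randomness of $v$), both $I_+$ and $I_-$ are nonempty, $\alpha>0$, $\beta>0$, and $$P_{\theta,r_e}(c\mid q)\le\frac{P_0}{P_0+(1-P_0)\,\alpha(1-\epsilon)\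big(1+\tfrac{\lambda^2\sigma^2\beta^2}{2}r_e^2\big)}.$$
   Context: Helpfulness of a model on a query $q$ with correct answer $c$ is the probability $P(c\mid q)$ the model assigns to the correct answer. Steering with coefficient $r_e$ changes the final hidden representation by $d$ with $|d|=\lambda|r_e|$; the direction of $d$ is modeled as random relative to the unembeddings of the $T$ tokens in $S$ (typically the highest-probability tokens, carrying most of the mass). *)

(* Defs.v *)
From HB Require Import structures.
From mathcomp Require Import all_boot all_order all_algebra.
From mathcomp Require Import all_classical all_reals all_analysis.
Set Implicit Arguments. Unset Strict Implicit. Unset Printing Implicit Defensive.
Import Order.TTheory GRing.Theory Num.Theory.
Local Open Scope ring_scope.
Local Open Scope classical_set_scope.

Definition dotv (R : realType) (d : nat) (x y : 'rV[R]_d) : R :=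
  \sum_(j < d) x ord0 j * y ord0 j.

Definition softmax (R : realType) (V : finType) (z : V -> R) (t : V) : R :=
  expR (z t) / \sum_(s : V) expR (z s).

Definition logits (R : realType) (V : finType) (d : nat)
  (u : V -> 'rV[R]_d) (x : 'rV[R]_d) : V -> R := fun t => dotv (u t) x.

Definition mutually_independent d (Omega : measurableType d) (R : realType)
  (P : probability Omega R) (V : finType) (S : {set V}) (X : V -> Omega -> R) :=
  (forall i, i \in S -> measurable_fun setT (X i)) /\
  forall (J : {set V}) (B : V -> set R), J \subset S ->
    (forall j, measurable (B j)) ->
    P (\bigcap_(j in [set j | j \in J]) (X j @^-1` B j)) =
    (\big[*%E/1%E]_(j in J) P (X j @^-1` B j))%E.

Definition identically_distributed d (Omega : measurableType d) (R : realType)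
  (P : probability Omega R) (V : finType) (S : {set V}) (X : V -> Omega -> R) :=
  forall i j, i \in S -> j \in S -> forall B : set R, measurable B ->
    P (X i @^-1` B) = P (X j @^-1` B).

Definition continuous_distribution d (Omega : measurableType d) (R : realType)
  (P : probability Omega R) (Y : Omega -> R) :=
  forall x : R, P (Y @^-1` [set x]) = 0%E.

(* Main.v *)
Require Import Defs.
From HB Require Import structures.
From mathcomp Require Import all_boot all_order all_algebra.
From mathcomp Require Import all_classical all_reals all_analysis.
From mathcomp Require Import ring lra.
Import Order.TTheory GRing.Theory Num.Theory.
Local Open Scope ring_scope.
Local Open Scope classical_set_scope.
Ltac pg := try (match goal with H : ?T |- _ => idtac H ":" T; fail end); match goal with |- ?g => idtac "GOAL" g end.

Lemma mpre d (T : measurableType d) (R : realType) (f : T -> R) (B : set R) :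
  measurable_fun setT f -> measurable B -> measurable (f @^-1` B).
Proof. by move=> mf mB; rewrite -[_ @^-1` _]setTI; exact: mf. Qed.

Lemma small_inv (R : realType) (e : R) : 0 < e -> exists n : nat, n.+1%:R^-1 < e.
Proof.
move=> e0; have := @near_infty_natSinv_lt R (PosNum e0).
by move=> /filter_ex [n Hn]; exists n.
Qed.

Lemma quantile d (T : measurableType d) (R : realType) (P : probability T R)
  (Y : T -> R) : measurable_fun setT Y ->
  (forall x, P (Y @^-1` [set x]) = 0%E) ->
  forall t, 0 < t < 1 -> exists x, P (Y @^-1` `]-oo, x]) = t%:E.
Proof.
move=> mY atom t /andP[t0 t1].
pose F x := P (Y @^-1` `]-oo, x]).
have mI x : measurable (Y @^-1` `]-oo, x]) by apply: mpre => //; exact: measurable_itv.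
have Fmono x y : x <= y -> (F x <= F y)%E.
  move=> xy; apply: le_measure; rewrite ?inE//.
  move=> w /=; rewrite !in_itv /= => /le_trans; exact.
pose A := [set y | (F y <= t%:E)%E].
have A0 : A !=set0.
  apply: contrapT => nA.
  have Hall n : (t%:E <= F (- n%:R)%R)%E.
    rewrite leNgt; apply/negP => Hlt; apply: nA; exists (- n%:R); exact: ltW.
  have cv : (F \o (fun n : nat => - n%:R)) @ \oo --> P (\bigcap_n (Y @^-1` `]-oo, (- n%:R)])).
    apply: nonincreasing_cvg_mu => //.
    + by rewrite (le_lt_trans (probability_le1 _ _)) ?ltry.
    + exact: bigcapT_measurable.
    + move=> m n mn; apply/subsetPset => x/=; rewrite !in_itv/= => /le_trans; apply.
      by rewrite lerN2 ler_nat.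
  have E0 : \bigcap_n (Y @^-1` `]-oo, (- n%:R)]) = set0.
    rewrite -subset0 => w /(_ (Num.bound (Y w)) I).
    by rewrite /= in_itv/= leNgt => /negP; apply; rewrite ltrNl unstable.ltrNbound.
  rewrite E0 measure0 in cv.
  have c0 : (t%:E <= 0)%E by apply: (cvge_to_ge cv); exact: nearW.
  by move: c0; rewrite lee_fin leNgt t0.
have [b Fb] : exists b, (t%:E < F b)%E.
  apply: contrapT => nb.
  have Hall n : (F (n%:R)%R <= t%:E)%E.
    rewrite leNgt; apply/negP => Hlt; apply: nb; exists n%:R; exact: Hlt.
  have cv : (F \o (fun n : nat => n%:R)) @ \oo --> P (\bigcup_n (Y @^-1` `]-oo, n%:R])).
    apply: nondecreasing_cvg_mu => //.
    + exact: bigcupT_measurable.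
    + move=> m n mn; apply/subsetPset => x/=; rewrite !in_itv/= => /le_trans; apply.
      by rewrite ler_nat.
  have E1 : \bigcup_n (Y @^-1` `]-oo, n%:R]) = setT.
    rewrite -subTset => w _ /=.
    by exists (Num.trunc (Y w)).+1; rewrite //= in_itv/= ltW// truncnS_gt.
  rewrite E1 probability_setT in cv.
  have c0 : (1 <= t%:E)%E by apply: (cvge_to_le cv); exact: nearW.
  by move: c0; rewrite lee_fin leNgt t1.
have ubA : ubound A b.
  move=> y Ay; rewrite leNgt; apply/negP => by_.
  have := le_trans (Fmono _ _ (ltW by_)) Ay.
  by rewrite leNgt Fb.
have hA : has_sup A by split => //; exists b.
pose s := sup A.
exists s; apply/le_anti/andP; split; last first.
  have cv : (F \o (fun n : nat => s + n.+1%:R^-1)) @ \oo --> P (\bigcap_n (Y @^-1` `]-oo, s + n.+1%:R^-1])).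
    apply: nonincreasing_cvg_mu => //.
    + by rewrite (le_lt_trans (probability_le1 _ _)) ?ltry.
    + exact: bigcapT_measurable.
    + move=> m n mn; apply/subsetPset => x/=; rewrite !in_itv/= => /le_trans; apply.
      by rewrite lerD2l lef_pV2 ?posrE// ler_nat.
  have Es : \bigcap_n (Y @^-1` `]-oo, s + n.+1%:R^-1]) = Y @^-1` `]-oo, s].
    apply/seteqP; split => w /=.
      move=> H; rewrite in_itv/= leNgt; apply/negP => sY.
      have [n Hn] : exists n : nat, n.+1%:R^-1 < Y w - s by apply: small_inv; lra.
      have H1 := H n I; move: H1; rewrite /= in_itv /= => H1; set q := n.+1%:R^-1 in H1 Hn; lra.
    move=> H n _; rewrite /= in_itv/=; move: H; rewrite in_itv/= => /le_trans; apply.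
    by rewrite lerDl invr_ge0.
  rewrite Es in cv.
  apply: (cvge_to_ge cv); apply: nearW => n /=.
  apply: ltW; rewrite ltNge; apply/negP => H.
  have := ub_le_sup hA.2 H; rewrite -/s leNgt => /negP; apply.
  by rewrite ltrDl invr_gt0.
have cv : (F \o (fun n : nat => s - n.+1%:R^-1)) @ \oo --> P (\bigcup_n (Y @^-1` `]-oo, s - n.+1%:R^-1])).
  apply: nondecreasing_cvg_mu => //.
  + exact: bigcupT_measurable.
  + move=> m n mn; apply/subsetPset => x/=; rewrite !in_itv/= => /le_trans; apply.
    by rewrite lerD2l lerN2 lef_pV2 ?posrE// ler_nat.
have Es : \bigcup_n (Y @^-1` `]-oo, s - n.+1%:R^-1]) = Y @^-1` `]-oo, s[.
  apply/seteqP; split => w /=.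
    move=> [n _]; rewrite /= !in_itv/= => /le_lt_trans; apply.
    by rewrite ltrBlDr ltrDl invr_gt0.
  rewrite in_itv/= => sY.
  have [n Hn] : exists n : nat, n.+1%:R^-1 < s - Y w by apply: small_inv; lra.
  exists n => //; rewrite /= in_itv/=; set q := n.+1%:R^-1 in Hn *; lra.
rewrite Es in cv.
have HPlt : (P (Y @^-1` `]-oo, s[) <= t%:E)%E.
  apply: (cvge_to_le cv); apply: nearW => n /=.
  have hn : 0 < n.+1%:R^-1 :> R by rewrite invr_gt0.
  have [e Ae He] := sup_adherent hn hA.
  exact: le_trans (Fmono _ _ (ltW He)) Ae.
have -> : P (Y @^-1` `]-oo, s]) = P (Y @^-1` `]-oo, s[ `|` Y @^-1` [set s]).
  congr (P _); apply/seteqP; split => w /=; rewrite !in_itv/=.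
    by rewrite le_eqVlt => /orP[/eqP ->|->]; [right|left].
  by case=> [/ltW|->].
have m1 : measurable (Y @^-1` `]-oo, s[) by apply: mpre => //; exact: measurable_itv.
have m2 : measurable (Y @^-1` [set s]) by apply: mpre.
have dj : Y @^-1` `]-oo, s[ `&` Y @^-1` [set s] = set0.
  rewrite -subset0 => w [] /=; rewrite in_itv/= => h1 h2; move: h1; by rewrite h2 ltxx.
rewrite (measureU P m1 m2 dj). have a0 := atom s. rewrite [X in (_ + X)%E]a0 adde0 //.
Qed.

Lemma bern (R : realFieldType) (x : R) (m : nat) : 0 <= x ->
  x ^+ m.+1 + m.+1%:R * x ^+ m <= (x + 1) ^+ m.+1.
Proof.
move=> x0; elim: m => [|m IH]; first by rewrite !expr1 expr0 mulr1.
rewrite (exprS (x + 1)) (exprS x) [x ^+ m.+1]exprS.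
have a0 : 0 <= x ^+ m by rewrite exprn_ge0.
set a := x ^+ m in IH a0 *.
set B := (x + 1) ^+ m.+1 in IH *.
have H := ler_wpM2l (_ : 0 <= x + 1) IH.
rewrite -!natr1 in IH H *.
have m0 : 0 <= m%:R :> R by rewrite ler0n.
have H' := H ltac:(lra).
rewrite exprS -/a in H'.
have ma : 0 <= m%:R * a by apply: mulr_ge0.
nra.
Qed.

Lemma sumpow (R : realFieldType) (n N : nat) :
  \sum_(k < N) (k.+1%:R : R) ^+ n <= N%:R ^+ n.+1 / n.+1%:R + N%:R ^+ n.
Proof.
elim: N => [|N IH].
  rewrite big_ord0 expr0n /= mul0r add0r; case: n => [|n] //.
rewrite big_ord_recr /=.
have B := @bern R N%:R n (ler0n R N).
rewrite natr1 in B.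
have n1 : 0 < n.+1%:R :> R by rewrite ltr0n.
apply: le_trans (lerD IH (lexx _)) _.
have ni : 0 <= n.+1%:R^-1 :> R by rewrite invr_ge0 ltW.
have B2 := ler_wpM2r ni B. simpl in B2.
rewrite mulrDl [n.+1%:R * _]mulrC mulfK ?gt_eqF // in B2.
by rewrite lerD2r.
Qed.

Lemma cellsum (R : realFieldType) (n N : nat) : (0 < N)%N ->
  \sum_(k < N) (N%:R^-1 * (k.+1%:R / N%:R) ^+ n) <= n.+1%:R^-1 + N%:R^-1 :> R.
Proof.
move=> N0.
have N0' : N%:R != 0 :> R by rewrite pnatr_eq0 -lt0n.
have Nn : N%:R ^+ n != 0 :> R by rewrite expf_neq0.
have e : \sum_(k < N) (N%:R^-1 * (k.+1%:R / N%:R) ^+ n) =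
   (N%:R^-1 / N%:R ^+ n) * \sum_(k < N) (k.+1%:R : R) ^+ n.
  rewrite mulr_sumr; apply: eq_bigr => k _; rewrite expr_div_n.
  by rewrite mulrA [_ / _ * _]mulrC mulrA [_ * N%:R^-1]mulrC.
rewrite e.
have c0 : 0 <= N%:R^-1 / N%:R ^+ n :> R.
  by rewrite divr_ge0 // ?invr_ge0 ?exprn_ge0 ?ler0n.
apply: le_trans (ler_wpM2l c0 (sumpow R n N)) _.
rewrite le_eqVlt; apply/orP; left; apply/eqP.
rewrite exprS; field.
by rewrite N0' Nn /= addrC natr1 pnatr_eq0.
Qed.

Lemma core d (Om : measurableType d) (R : realType) (P : probability Om R)
  (V : finType) (S : {set V}) (Y : V -> Om -> R) (c : V) :
  c \in S -> mutually_independent P S Y -> identically_distributed P S Y ->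
  (forall i, i \in S -> continuous_distribution P (Y i)) ->
  measurable [set w | forall i, i \in S -> Y i w <= Y c w] /\
  (P [set w | forall i, i \in S -> (Y i w <= Y c w)%R] <= (#|S|%:R^-1)%:E)%E.
Proof.
move=> cS [mY indep] iid cont.
set M := [set w | forall i, i \in S -> Y i w <= Y c w].
have mM : measurable M.
  have -> : M = \bigcap_(i in [set i | i \in S]) [set w | Y i w <= Y c w].
    by apply/seteqP; split => w /= H i; apply: H.
  apply: fin_bigcap_measurable; first exact: finite_finset.
  move=> i /= iS; rewrite -[X in measurable X]setTI.
  by apply: measurable_fun_le => //; apply: mY.
split => //.
have main : forall N : nat, (0 < N)%N ->
    (P M <= (#|S|%:R^-1 + N%:R^-1)%:E)%E.
  move=> N N0.
  have cdY : forall x, P (Y c @^-1` [set x]) = 0%E := cont c cS.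
  have mYc : measurable_fun setT (Y c) := mY c cS.
  have N0' : N%:R != 0 :> R by rewrite pnatr_eq0 -lt0n.
  have [xs Hxs] : {xs : nat -> R & forall k, (0 < k < N)%N ->
      P (Y c @^-1` `]-oo, xs k]) = (k%:R / N%:R)%:E}.
    apply: (@boolp.choice nat R (fun k x => (0 < k < N)%N -> P (Y c @^-1` `]-oo, x]) = (k%:R / N%:R)%:E)) => k.
    case: (boolP ((0 < k < N)%N)) => hk; last by exists 0 => hk2; exfalso; move/negP: hk; apply.
    have tk : 0 < (k%:R / N%:R : R) < 1.
      case/andP: hk => k0 kN; apply/andP; split.
        by rewrite divr_gt0 // ltr0n.
      by rewrite ltr_pdivrMr ?ltr0n // mul1r ltr_nat.
    have [x Hx] := @quantile _ _ _ P (Y c) mYc cdY _ tk.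
    by exists x.
  have Fmono x y : x <= y -> (P (Y c @^-1` `]-oo, x]) <= P (Y c @^-1` `]-oo, y]))%E.
    move=> xy; apply: le_measure; rewrite ?inE; try (apply: mpre => //; exact: measurable_itv).
    move=> w /=; rewrite !in_itv /= => /le_trans; exact.
  pose G (k : nat) : set R :=
    if k == 0%N then set0 else if (N <= k)%N then setT else `]-oo, xs k].
  have mG k : measurable (G k).
    rewrite /G; case: ifP => _ //; case: ifP => _ //; exact: measurable_itv.
  have PG k : (k <= N)%N -> P (Y c @^-1` G k) = (k%:R / N%:R)%:E.
    move=> kN; rewrite /G; case: ifP => [/eqP -> | k0].
      by rewrite preimage_set0 measure0 mul0r.
    case: ifP => [NK | NK].
      have -> : k = N by apply/eqP; rewrite eqn_leq kN NK.
      by rewrite preimage_setT probability_setT divff.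
    by apply: Hxs; rewrite lt0n k0 ltnNge NK.
  have Gdown k y z : y <= z -> G k z -> G k y.
    rewrite /G => yz; case: ifP => // _; case: ifP => // _.
    rewrite /= !in_itv /= => /(le_trans yz); exact.
  have Gsub k : (k < N)%N -> G k `<=` G k.+1.
    move=> kN y; rewrite /G; case: ifP => [_ //|k0].
    rewrite (leqNgt N k) kN /=.
    case: ifP => // Nk1.
    rewrite /= !in_itv /= => yk; apply: le_trans yk _.
    rewrite leNgt; apply/negP => lt.
    have := Fmono _ _ (ltW lt).
    have h1 : (0 < k.+1 < N)%N by rewrite /= ltnNge Nk1.
    have h2 : (0 < k < N)%N by rewrite lt0n k0 kN.
    rewrite (Hxs _ h1) (Hxs _ h2) lee_fin ler_pM2r ?invr_gt0 ?ltr0n ?lt0n //.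
    by rewrite ler_nat ltnn.
    by rewrite -lt0n.
  pose B (k : nat) (j : V) : set R := if j == c then G k.+1 `\` G k else G k.+1.
  have mB k j : measurable (B k j).
    by rewrite /B; case: ifP => _; [apply: measurableD|]; exact: mG.
  pose Ev k := \bigcap_(j in [set j | j \in S]) (Y j @^-1` B k j).
  have mEv k : measurable (Ev k).
    apply: fin_bigcap_measurable; first exact: finite_finset.
    by move=> j /= jS; apply: mpre; [exact: mY|exact: mB].
  have PEv k : (k < N)%N ->
      P (Ev k) = (N%:R^-1 * (k.+1%:R / N%:R) ^+ #|S :\ c|)%:E.
    move=> kN; rewrite /Ev (indep S (B k) (subxx S) (mB k)).
    rewrite (big_setD1 c cS) /=.
    rewrite (eq_bigr (fun=> (k.+1%:R / N%:R)%:E)); last first.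
      move=> i; rewrite in_setD1 => /andP[ic iS].
      by rewrite /B (negbTE ic) (iid i c iS cS _ (mG _)) PG.
    rewrite prodEFin prodr_const /B eqxx.
    have -> : Y c @^-1` (G k.+1 `\` G k) = Y c @^-1` G k.+1 `\` Y c @^-1` G k by [].
    rewrite measureD; first last.
    - by rewrite (le_lt_trans (probability_le1 _ _)) ?ltry //; apply: mpre.
    - by apply: mpre.
    - by apply: mpre.
    have -> : Y c @^-1` G k.+1 `&` Y c @^-1` G k = Y c @^-1` G k.
      by apply/setIidr => w /= Gw; apply: Gsub.
    have p1 := PG k.+1 kN; have p2 := PG k (ltnW kN).
    rewrite [X in ((X - _) * _)%E]p1 [X in ((_ - X) * _)%E]p2 -EFinB -EFinM; congr (_%:E); congr (_ * _).
    by rewrite -mulrBl -natrB // subSnn mul1r.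
  have cover : M `<=` \big[setU/set0]_(k < N) Ev k.
    move=> w Mw; rewrite -bigcup_mkord.
    have ex : exists m, (Y c w \in G m).
      exists N; rewrite in_setE /G.
      by case: ifP => [/eqP N00|_]; [move: N0; rewrite N00|rewrite leqnn].
    case: (ex_minnP ex) => m Gm minm.
    have m0 : m != 0%N.
      by apply/eqP => m00; move: Gm; rewrite m00 in_setE /G.
    have mN : (m <= N)%N.
      apply: minm; rewrite in_setE /G.
      by case: ifP => [/eqP N00|_]; [move: N0; rewrite N00|rewrite leqnn].
    have mS : m.-1.+1 = m by rewrite prednK // lt0n.
    exists m.-1.
      by rewrite /= -ltnS mS.
    move=> j /= jS; rewrite /B; case: ifP => [/eqP -> | jc].
      rewrite mS; split; first by rewrite -in_setE.
      move=> Gm1; have := minm _ (mem_set Gm1).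
      by rewrite -ltnS mS ltnn.
    by rewrite mS; apply: (Gdown m _ (Y c w) (Mw j jS)); rewrite -in_setE.
  have H := content_subadditive P (F := Ev) (n := N) (fun k _ => mEv k) mM cover.
  apply: (le_trans H).
  rewrite (eq_bigr (fun k : 'I_N => (N%:R^-1 * (k.+1%:R / N%:R) ^+ #|S :\ c|)%:E)); last first.
    by move=> k _; exact: (PEv k (ltn_ord k)).
  rewrite sumEFin lee_fin.
  have -> : #|S| = #|S :\ c|.+1 by rewrite (cardsD1 c S) cS.
  exact: cellsum.
have Mfin : P M \is a fin_num by rewrite ge0_fin_numE ?measure_ge0 // (le_lt_trans (probability_le1 _ _)) ?ltry.
rewrite -(fineK Mfin) lee_fin.
apply/ler_addgt0Pr => e e0.
have [n Hn] := @small_inv R e e0.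
have := main n.+1 isT; rewrite -(fineK Mfin) lee_fin => H.
by apply: (le_trans H); rewrite lerD2l ltW.
Qed.

Lemma exp_quad (R : realType) (x : R) : 0 <= x -> 1 + x ^+ 2 / 2 <= expR x.
Proof.
move=> x0.
have -> : expR x = expR (x / 3) ^+ 3.
  by rewrite -expRM_natl; congr expR; rewrite mulrC -mulrA mulVf ?mulr1 // pnatr_eq0.
have h1 := expR_ge1Dx (x / 3).
have h0 : 0 <= 1 + x / 3 by rewrite addr_ge0 // divr_ge0.
have h3 : (1 + x / 3) ^+ 3 <= expR (x / 3) ^+ 3.
  by rewrite lerXn2r // ?nnegrE // (le_trans h0 h1).
apply: le_trans h3.
set y := x / 3.
have -> : x = 3 * y by rewrite /y mulrC -mulrA mulVf ?mulr1 // pnatr_eq0.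
have y0 : 0 <= y by rewrite divr_ge0.
rewrite !exprS expr0 !mulr1.
nra.
Qed.

Lemma jensen_exp (R : realType) (V : finType) (I : {set V}) (p D : V -> R) (s : R) :
  (forall i, i \in I -> 0 < p i) -> 0 < \sum_(i in I) p i ->
  (\sum_(i in I) p i) * expR (s * ((\sum_(i in I) p i)^-1 * \sum_(i in I) p i * D i))
  <= \sum_(i in I) p i * expR (s * D i).
Proof.
move=> p0 Pp0.
set Pp := \sum_(i in I) p i.
set cp := Pp^-1 * \sum_(i in I) p i * D i.
have key : forall i, i \in I -> p i * expR (s * cp) * (1 + s * (D i - cp)) <= p i * expR (s * D i).
  move=> i iI.
  have -> : expR (s * D i) = expR (s * cp) * expR (s * (D i - cp)).
    by rewrite -expRD; congr expR; rewrite mulrBr addrC subrK.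
  rewrite -[X in X <= _]mulrA ler_pM2l ?p0 // ler_pM2l ?expR_gt0 //; exact: expR_ge1Dx.
apply: le_trans (ler_sum _ key).
rewrite (eq_bigr (fun i => expR (s * cp) * (p i + s * (p i * D i) - s * cp * p i))); last first.
  by move=> i _; ring.
rewrite -mulr_sumr big_split /= big_split /= -!mulr_sumr -/Pp.
rewrite sumrN -mulr_sumr.
have -> : \sum_(i in I) p i * D i = Pp * cp by rewrite /cp mulrA divff ?mul1r // gt_eqF.
rewrite -/Pp; rewrite le_eqVlt; apply/orP; left; apply/eqP; ring.
Qed.

Lemma dotvDZ (R : realType) (n : nat) (x y z : 'rV[R]_n) (a : R) :
  dotv x (y + a *: z) = dotv x y + a * dotv z x.
Proof.
rewrite /dotv mulr_sumr -big_split /=; apply: eq_bigr => j _.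
by rewrite !mxE; ring.
Qed.

Lemma softmax_pos (R : realType) (V : finType) (z : V -> R) t : 0 < softmax z t.
Proof.
rewrite /softmax divr_gt0 ?expR_gt0 //.
rewrite (bigD1 t) //= ltr_pwDl ?expR_gt0 // sumr_ge0 //.
Qed.

Lemma softmax_shift (R : realType) (V : finType) (z X : V -> R) (s : R) (c : V) :
  softmax (fun t => z t + s * X t) c =
  softmax z c / \sum_t softmax z t * expR (s * (X t - X c)).
Proof.
rewrite /softmax.
set W := \sum_t expR (z t + s * X t).
set Z := \sum_t expR (z t).
have Zp : 0 < Z by rewrite /Z (bigD1 c) //= ltr_pwDl ?expR_gt0 // sumr_ge0 // => i _; exact: ltW (expR_gt0 _).
have Wp : 0 < W by rewrite /W (bigD1 c) //= ltr_pwDl ?expR_gt0 // sumr_ge0 // => i _; exact: ltW (expR_gt0 _).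
have Ep : 0 < expR (s * X c) := expR_gt0 _.
have -> : \sum_t expR (z t) / Z * expR (s * (X t - X c)) = W / (Z * expR (s * X c)).
  rewrite /W mulr_suml; apply: eq_bigr => t _.
  rewrite mulrBr expRB expRD.
  field; by rewrite !gt_eqF ?expR_gt0.
rewrite expRD; field; by rewrite !gt_eqF ?expR_gt0.
Qed.

Theorem theorem2 (R : realType) (V : finType) (dim : nat)
  (u : V -> 'rV[R]_dim) (r : 'rV[R]_dim) (c : V) (S : {set V})
  (eps : R) (re lam sigma : R)
  (dO : measure_display) (Omega : measurableType dO) (P : probability Omega R)
  (v : Omega -> 'rV[R]_dim) :
  let p := softmax (logits u r) in
  let P0 := p c in
  let X : V -> Omega -> R := fun i w => dotv (v w) (u i) in
  P0 < 1 ->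
  c \in S -> (3 <= #|S|)%N ->
  0 < \sum_(i in S :\ c) p i ->
  0 <= eps < 1 ->
  \sum_(i in S :\ c) p i = (1 - eps) * (1 - P0) ->
  re != 0 -> 0 < lam ->
  (forall w, dotv (v w) (v w) = 1) ->
  mutually_independent P S X ->
  identically_distributed P S X ->
  (forall i, i \in S -> continuous_distribution P (X i)) ->
  0 < sigma ->
  (forall i, i \in S -> X i \in Lfun P 2%:E /\ 'V_P[X i] = (sigma ^+ 2)%:E) ->
  exists E : set Omega, measurable E /\
    ((1 - 2 / #|S|%:R)%:E <= P E)%E /\
    forall w, E w ->
      let Ip := [set i in S :\ c | 0 < X i w - X c w] in
      let Im := [set i in S :\ c | 0 < - (X i w - X c w)] in
      let Pp := \sum_(i in Ip) p i in
      let Pm := \sum_(i in Im) p i in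
      let cp := Pp^-1 * \sum_(i in Ip) p i * (X i w - X c w) in
      let cm := Pm^-1 * \sum_(i in Im) p i * (X i w - X c w) in
      let alpha := Num.min Pp Pm / ((1 - P0) * (1 - eps)) in
      let beta := Num.min `|cm| cp / sigma in
      let psteer := softmax (logits u (r + (lam * `|re|) *: v w)) in
      [/\ Ip != finset.set0, Im != finset.set0, 0 < alpha, 0 < beta &
        psteer c <= P0 / (P0 + (1 - P0) * alpha * (1 - eps) *
                     (1 + lam ^+ 2 * sigma ^+ 2 * beta ^+ 2 / 2 * re ^+ 2))].
Proof.
move=> p P0 X hP0 cS hS hsum heps hsumeq hre hlam hv indep iid cont hsig hvar.
have [mMx PMx] := @core _ _ _ P V S X c cS indep iid cont.
pose Y := fun i w => - X i w.
have indepY : mutually_independent P S Y.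
  case: indep => mX ind; split.
    by move=> i iS; apply: measurable_realfun.measurable_funN; exact: mX.
  move=> J B JS mB.
  have mB' : forall j, measurable (-%R @^-1` B j).
    by move=> j; apply: mpre; [exact: measurable_realfun.oppr_measurable|exact: mB].
  exact (ind J (fun j => -%R @^-1` B j) JS mB').
have iidY : identically_distributed P S Y.
  move=> i j iS jS B mB.
  have mB' : measurable (-%R @^-1` B).
    by apply: mpre; [exact: measurable_realfun.oppr_measurable|exact: mB].
  exact (iid i j iS jS _ mB').
have contY : forall i, i \in S -> continuous_distribution P (Y i).
  move=> i iS x.
  have -> : Y i @^-1` [set x] = X i @^-1` [set - x].
    by apply/seteqP; split => w; rewrite /Y /=; [move=> <-; rewrite opprK | move=> ->; rewrite opprK].
  exact: cont i iS (- x).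
have [mMn PMn] := @core _ _ _ P V S Y c cS indepY iidY contY.
set Mx := [set w | forall i, i \in S -> (X i w <= X c w)%R] in mMx PMx.
set Mn := [set w | forall i, i \in S -> (Y i w <= Y c w)%R] in mMn PMn.
exists (~` (Mx `|` Mn)); split; first by apply: measurableC; apply: measurableU.
split.
  rewrite probability_setC; last by apply: measurableU.
  have H2 : (P (Mx `|` Mn) <= (#|S|%:R^-1 + #|S|%:R^-1)%:E)%E.
    apply: le_trans (measureU2 P mMx mMn) _.
    by rewrite EFinD; apply: leeD.
  have afin : P (Mx `|` Mn) \is a fin_num.
    by rewrite ge0_fin_numE ?measure_ge0 // (le_lt_trans (probability_le1 _ _)) ?ltry //; apply: measurableU.
  rewrite -(fineK afin) lee_fin in H2.
  rewrite -(fineK afin) -EFinB lee_fin.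
  have -> : 2 / #|S|%:R = #|S|%:R^-1 + #|S|%:R^-1 :> R by ring.
  set q := #|S|%:R^-1 in H2 *; lra.
move=> w Ew Ip Im Pp Pm cp cm alpha beta psteer.
have [i iS lt1] : exists2 i, i \in S & X c w < X i w.
  apply: contrapT => H; apply: Ew; left => i iS; rewrite leNgt; apply/negP => lt.
  by apply: H; exists i.
have [j jS lt2] : exists2 j, j \in S & X j w < X c w.
  apply: contrapT => H; apply: Ew; right => j jS; rewrite /Y lerN2 leNgt; apply/negP => lt.
  by apply: H; exists j.
have ic : i != c by apply/eqP => ic; move: lt1; rewrite ic ltxx.
have jc : j != c by apply/eqP => jc; move: lt2; rewrite jc ltxx.
have iIp : i \in Ip by rewrite inE in_setD1 ic iS /= subr_gt0.
have jIm : j \in Im by rewrite inE in_setD1 jc jS /= oppr_gt0 subr_lt0.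
have hp : forall t, 0 < p t := fun t => softmax_pos _ _ _ t.
have Ipc : forall t, t \in Ip -> (t != c) /\ 0 < X t w - X c w.
  by move=> t; rewrite inE in_setD1 => /andP[/andP[-> _] ->].
have Imc : forall t, t \in Im -> (t != c) /\ X t w - X c w < 0.
  by move=> t; rewrite inE in_setD1 oppr_gt0 => /andP[/andP[-> _] ->].
have Pp0 : 0 < Pp.
  rewrite /Pp (bigD1 i) //= ltr_pwDl ?hp // sumr_ge0 // => t _; exact: ltW.
have Pm0 : 0 < Pm.
  rewrite /Pm (bigD1 j) //= ltr_pwDl ?hp // sumr_ge0 // => t _; exact: ltW.
have cp0 : 0 < cp.
  rewrite /cp mulr_gt0 ?invr_gt0 //.
  rewrite (bigD1 i) //=.
  have a1 : 0 < p i * (X i w - X c w) by rewrite mulr_gt0 ?hp // subr_gt0.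
  have a2 : 0 <= \sum_(t in Ip | t != i) p t * (X t w - X c w).
    apply: sumr_ge0 => t /andP[tI _]; apply: mulr_ge0; [exact: ltW (hp t) | exact: ltW (Ipc t tI).2].
  set A1 := p i * _ in a1 *; set A2 := \sum_(t in Ip | t != i) _ in a2 *; lra.
have cm0 : cm < 0.
  rewrite /cm pmulr_rlt0 ?invr_gt0 //.
  rewrite (bigD1 j) //=.
  have a1 : p j * (X j w - X c w) < 0 by rewrite pmulr_rlt0 ?hp // subr_lt0.
  have a2 : \sum_(t in Im | t != j) p t * (X t w - X c w) <= 0.
    apply: sumr_le0 => t /andP[tI _]; rewrite pmulr_rle0 ?hp // ltW //; exact: (Imc t tI).2.
  set A1 := p j * _ in a1 *; set A2 := \sum_(t in Im | t != j) _ in a2 *; lra.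
have P00 : 0 < P0 := hp c.
have hP1 : 0 < 1 - P0 by rewrite subr_gt0.
have he1 : 0 < 1 - eps by case/andP: heps => _ h; rewrite subr_gt0.
set mn := Num.min Pp Pm.
set m := Num.min `|cm| cp.
have mn0 : 0 < mn by rewrite lt_min Pp0 Pm0.
have m0 : 0 < m by rewrite lt_min cp0 normr_gt0 lt_eqF.
have alpha0 : 0 < alpha by rewrite /alpha divr_gt0 // mulr_gt0.
have beta0 : 0 < beta by rewrite /beta divr_gt0.
split => //.
- by apply/set0Pn; exists i.
- by apply/set0Pn; exists j.
pose s := lam * `|re|.
have s0 : 0 <= s by rewrite mulr_ge0 // ltW.
have Kdef : (1 - P0) * alpha * (1 - eps) *
    (1 + lam ^+ 2 * sigma ^+ 2 * beta ^+ 2 / 2 * re ^+ 2) = mn * (1 + (s * m) ^+ 2 / 2).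
  rewrite /alpha /beta /s -/mn -/m -(real_normK (num_real re)).
  field; rewrite !gt_eqF //.
rewrite Kdef.
have elog : logits u (r + (lam * `|re|) *: v w) = (fun t => logits u r t + s * X t w).
  by apply: funext => t; rewrite /logits dotvDZ.
rewrite /psteer elog softmax_shift -/p -/P0.
set Q := \sum_t p t * expR (s * (X t w - X c w)).
have K0 : 0 < mn * (1 + (s * m) ^+ 2 / 2).
  rewrite mulr_gt0 // ltr_pwDl // divr_ge0 // sqr_ge0 //.
have lowQ : P0 + mn * (1 + (s * m) ^+ 2 / 2) <= Q.
  have split1 : P0 + \sum_(t in Ip) p t * expR (s * (X t w - X c w)) <= Q.
    rewrite /Q [X in _ <= X](bigD1 c) //= subrr mulr0 expR0 mulr1 lerD2l.
    rewrite [X in _ <= X](bigID (fun t => t \in Ip)) /=.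
    have -> : \sum_(t | (t != c) && (t \in Ip)) p t * expR (s * (X t w - X c w)) =
              \sum_(t in Ip) p t * expR (s * (X t w - X c w)).
      apply: eq_bigl => t; case: (boolP (t \in Ip)) => h; rewrite ?andbT ?andbF //.
      exact: (Ipc t h).1.
    rewrite lerDl sumr_ge0 // => t _; rewrite mulr_ge0 // ltW // ?hp // expR_gt0.
  apply: le_trans split1; rewrite lerD2l.
  have J := @jensen_exp R V Ip p (fun t => X t w - X c w) s (fun t _ => hp t) Pp0.
  apply: le_trans J.
  have hm : m <= cp by rewrite /m ge_min lexx orbT.
  have hmn : mn <= Pp by rewrite /mn ge_min lexx.
  have h1 : s * m <= s * cp := ler_wpM2l s0 hm.
  have h0 : 0 <= s * m := mulr_ge0 s0 (ltW m0).
  have hsq : (s * m) ^+ 2 <= (s * cp) ^+ 2.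
    rewrite !expr2; move: h0 h1; set a := s * m; set b := s * cp => h0 h1; nra.
  have eq2 : mn * (1 + (s * m) ^+ 2 / 2) <= Pp * (1 + (s * cp) ^+ 2 / 2).
    move: hsq mn0 hmn; set A := (s * m) ^+ 2; set B := (s * cp) ^+ 2.
    have A0 : 0 <= A by rewrite /A sqr_ge0.
    move: A0; clearbody A B; move=> A0 hsq mn0 hmn; nra.
  apply: le_trans eq2 _; rewrite ler_pM2l //.
  exact: (@exp_quad R _ (mulr_ge0 s0 (ltW cp0))).
have Qp : 0 < Q by apply: lt_le_trans lowQ; exact: (addr_gt0 P00 K0).
apply: ler_wpM2l; first exact: ltW.
have KP : 0 < P0 + mn * (1 + (s * m) ^+ 2 / 2) by exact: (addr_gt0 P00 K0).
rewrite lef_pV2 ?posrE //.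
Qed.
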